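(* Let $(P,\leq)$ be a partially ordered set, $S(P):=\{(p,q)\in P^2: p\leq q,\ p\neq q\}$ its strict order, and $O(P)$ the lattice of suborders of $P$, i.e. the set of transitively closed subsets of $S(P)$ ordered by inclusion. Then $O(P)$ is order-scattered if and only if $S(P)$ is finite.
   Context: A poset is order-scattered if it contains no subset order-isomorphic to the chain $\mathbb{Q}$ of rationals. A subset $R\subseteq S(P)$ is transitively closed if $(a,b),(b,c)\in R$ imply $(a,c)\in R$. *)

(* Defs.v *)
From HB Require Import structures.
From mathcomp Require Import all_boot all_order all_algebra.
From mathcomp Require Import boolp classical_sets cardinality.
Set Implicit Arguments. Unset Strict Implicit. Unset Printing Implicit Defensive.
Import Order.TTheory GRing.Theory Num.Theory.
Local Open Scope classical_set_scope.

Definition strict_order {d : Order.disp_t} (P : porderType d) : set (P * P)%type :=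
  [set pq | (pq.1 <= pq.2)%O /\ pq.1 <> pq.2].
Arguments strict_order {d} P.

Definition trans_closed (T : Type) (R : set (T * T)) : Prop :=
  forall a b c, R (a, b) -> R (b, c) -> R (a, c).

Definition suborders {d : Order.disp_t} (P : porderType d) : set (set (P * P)%type) :=
  [set R | R `<=` strict_order P /\ trans_closed R].
Arguments suborders {d} P.

Definition order_scattered (T : Type) (le : T -> T -> Prop) (A : set T) : Prop :=
  ~ exists f : rat -> T,
      (forall q, A (f q)) /\ (forall x y : rat, (x <= y)%R <-> le (f x) (f y)).

(* Main.v *)
Require Import Defs.
From mathcomp Require Import all_boot all_order all_algebra.
From mathcomp Require Import finmap.
From mathcomp Require Import boolp classical_sets cardinality functions.
Import Order.TTheory GRing.Theory Num.Theory.
Local Open Scope classical_set_scope.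
Section S.
Variables (d : Order.disp_t) (P : porderType d).
Lemma max_seq (s : seq P) : s != [::] ->
  exists2 m, m \in s & forall y, y \in s -> ~ (m < y)%O.
Proof.
elim: s => [//|y s IH] _.
case: (eqVneq s [::]) => [->|sn0].
  by exists y; rewrite ?mem_seq1 // => z; rewrite mem_seq1 => /eqP ->; rewrite ltxx.
have [m ms mmax] := IH sn0.
case: (boolP (m < y)%O) => my.
  exists y; first by rewrite mem_head.
  move=> z; rewrite in_cons => /orP[/eqP ->|zs]; first by rewrite ltxx.
  by move=> yz; apply: (mmax z zs); exact: lt_trans yz.
exists m; first by rewrite in_cons ms orbT.
move=> z; rewrite in_cons => /orP[/eqP ->|zs]; first by apply/negP.
exact: mmax.
Qed.
Lemma inf_inj T (A : set T) : infinite_set A ->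
  exists g : nat -> T, injective g /\ forall n, A (g n).
Proof.
move=> /infiniteP /card_leP [f].
exists (fun n => val (f (SigSub (mem_set (I : [set: nat] n))))).
split.
- move=> m n /val_inj /(@inj _ _ _ f) h.
  have := congr1 val (h (mem_set I) (mem_set I)). by [].
- move=> n; exact: set_valP.
Qed.
Lemma embed (X : set (P * P)%type) (g : nat -> (P * P)%type) :
  injective g -> (forall n, X (g n)) -> X `<=` strict_order P ->
  (forall a b c, X (a, b) -> X (b, c) -> False) ->
  exists f : rat -> set (P * P)%type,
      (forall q, suborders P (f q)) /\
      (forall x y : rat, (x <= y)%R <-> f x `<=` f y).
Proof.
move=> ginj gX XS Xfree.
pose h := fun r : rat => g (choice.pickle r).
have hinj : injective h by move=> r s /ginj; exact: (pcan_inj (@pickleK_inv _)).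
exists (fun q => (h @` [set r : rat | (r < q)%R])).
split.
- move=> q; split.
    by move=> pq [r _ <-]; apply: XS; apply: gX.
  move=> a b c [r _ er] [s _ es]; exfalso; apply: (Xfree a b c).
    by rewrite -er; apply: gX.
  by rewrite -es; apply: gX.
- move=> x y; split.
    by move=> xy pq [r /= rx <-]; exists r => //=; exact: Order.POrderTheory.lt_le_trans rx xy.
  move=> sub; rewrite leNgt; apply/negP => yx.
  have [r /= ry /hinj ery] : (h @` [set r : rat | (r < y)%R]) (h y).
    by apply: sub; exists y.
  by move: ry; rewrite ery Order.POrderTheory.ltxx.
Qed.
Lemma fwd : ~ finite_set (strict_order P) ->
  exists (X : set (P * P)%type) (g : nat -> (P * P)%type),
  [/\ injective g, (forall n, X (g n)), X `<=` strict_order P &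
  (forall a b c, X (a, b) -> X (b, c) -> False)].
Proof.
move=> Sinf.
have ltS (a b : P) : strict_order P (a, b) <-> (a < b)%O.
  rewrite /strict_order /= lt_def; split.
    by move=> [-> ab]; rewrite andbT; apply/eqP => ba; apply: ab.
  by move=> /andP[ba ->]; split => // ab; move: ba; rewrite ab eqxx.
have [[a ainf]|allfin] := pselect (exists a : P, infinite_set [set b | (a < b)%O]).
  have [g0 [g0inj g0a]] := @inf_inj _ _ ainf.
  exists [set pq | pq.1 = a /\ (a < pq.2)%O], (fun n => (a, g0 n)); split.
  - by move=> m n [/g0inj].
  - by move=> n; split => //; exact: g0a.
  - by move=> [x y] /= [-> ay]; apply/ltS.
  - by move=> x y z /= [_ ay] [ya _]; move: ay; rewrite ya ltxx.
have fin (a : P) : finite_set [set b : P | (a < b)%O].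
  by apply: contrapT => h; apply: allfin; exists a.
pose A := [set a : P | exists b, (a < b)%O].
have Ainf : infinite_set A.
  move=> Afin; apply: Sinf.
  apply: (@sub_finite_set _ _ (A `*`` (fun a => [set b | (a < b)%O]))).
    by move=> [x y] /ltS xy; split => //=; exists y.
  by apply: finite_setXR => // x _; apply: fin.
have hM x : A x -> exists m, (x < m)%O /\ forall z, ~ (m < z)%O.
  move=> [b xb].
  have [s es] := (finite_seqP _).1 (fin x).
  have sn0 : s != [::].
    apply/eqP => s0; have : [set b | (x < b)%O] b by [].
    by rewrite es s0.
  have [m ms mmax] := @max_seq _ sn0.
  have xm : (x < m)%O.
    have : [set` s] m by [].
    by rewrite -es.
  exists m; split => // z mz; apply: (mmax z).
    have : [set b | (x < b)%O] z by exact: lt_trans mz.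
    by rewrite es.
  exact: mz.
have [g0 [g0inj g0A]] := @inf_inj _ _ Ainf.
pose M n := projT1 (cid (hM _ (g0A n))).
have MP n : (g0 n < M n)%O /\ forall z, ~ (M n < z)%O := projT2 (cid (hM _ (g0A n))).
exists [set pq | strict_order P pq /\ forall z, ~ (pq.2 < z)%O], (fun n => (g0 n, M n)).
split.
- by move=> m n [/g0inj].
- by move=> n; split; [apply/ltS; case: (MP n) | case: (MP n)].
- by move=> pq [].
- by move=> x y z [_ ymax] [/ltS yz _]; exact: ymax yz.
Qed.
Lemma back : finite_set (strict_order P) ->
  order_scattered (fun R1 R2 : set (P * P)%type => R1 `<=` R2) (suborders P).
Proof.
move=> Sfin [f [fsub femb]].
have ffin q : finite_set (f q) by apply: sub_finite_set Sfin; case: (fsub q).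
have key n : (n <= #|` fset_set (f (n%:R)%R)|)%N.
  elim: n => [//|n IH].
  apply: (leq_ltn_trans IH). apply: fproper_ltn_card.
  rewrite fproperE; apply/andP; split.
    rewrite -fset_set_sub ?ffin //.
    have h : ((n%:R : rat) <= n.+1%:R)%R by rewrite ler_nat.
    exact: (proj1 (femb _ _) h).
  apply/negP; rewrite -fset_set_sub ?ffin // => H.
  by have := proj2 (femb _ _) H; rewrite ler_nat ltnn.
have := key (#|` fset_set (strict_order P)|).+1.
have : (#|` fset_set (f (#|` fset_set (strict_order P)|).+1%:R%R)| <= #|` fset_set (strict_order P)|)%N.
  set q := (_%:R)%R.
  have hs : f q `<=` strict_order P by case: (fsub q).
  rewrite (fset_set_sub (ffin q) Sfin) in hs.
  exact: fsubset_leq_card hs.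
move=> h1 h2; have := leq_trans h2 h1; by rewrite ltnn.
Qed.
End S.

Theorem theorem6p2 (d : Order.disp_t) (P : porderType d) :
  order_scattered (fun R1 R2 : set (P * P)%type => R1 `<=` R2) (suborders P)
  <-> finite_set (strict_order P).
Proof.
split; last exact: back.
move=> sc; apply: contrapT => Sinf; apply: sc.
have [X [g [ginj gX XS Xf]]] := @fwd _ _ Sinf.
exact: (@embed _ _ _ _ ginj gX XS Xf).
Qed.
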